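(* Let $0<q<1$, $p=q^{1/2}$, $\alpha,\beta>-1$ real, and let $b_n=b_n^{(\alpha,\beta)}$ be the polynomials defined by the recurrence below. Then for every $n\ge0$ and $\mu\in\mathbb C$, $$b_n(\mu)=\sum_{j=0}^n\frac{(p^{-\beta-n-1},-p^{-\alpha-n-1};p)_j}{(p,p^{-2n-\alpha-\beta-2};p)_j}(-1)^jp^{j/2}\mu^{n-j}\;{}_4\phi_3\!\left(p^{-j},p^{2n+\alpha+\beta+3-j},p^{\beta+1},-p^{\alpha+1};\,p^{\alpha+\beta+2},p^{n+\beta+2-j},-p^{\alpha+n+2-j};\,p,p\right).$$
   Context: Notation: $(a;p)_0=1$, $(a;p)_n=\prod_{j=0}^{n-1}(1-ap^j)$, $(a_1,\dots,a_m;p)_n=\prod_k(a_k;p)_n$; ${}_4\phi_3(a_1,\dots,a_4;b_1,b_2,b_3;p,z)=\sum_{k\ge0}\frac{(a_1,a_2,a_3,a_4;p)_k}{(p,b_1,b_2,b_3;p)_k}z^k$. The polynomials $b_n=b_n^{(\alpha,\beta)}$ are defined by $b_{-1}(\mu)=0$, $b_0(\mu)=1$, and for $k\ge0$ $$b_{k+1}(\mu)=\Big[\mu+\frac{(1-p^{\beta-\alpha})(1+p^{\alpha+\beta+3+2k})}{(1-p^{\alpha+\beta+2+2k})(1-p^{\alpha+\beta+4+2k})}p^{\alpha+3/2+k}\Big]b_k(\mu)+\frac{(1-p^{2\alpha+2+2k})(1-p^{2\beta+2+2k})\,p^{2k+\alpha+\beta+2}}{(1-p^{\alpha+\beta+1+2k})(1-p^{\alpha+\beta+2+2k})^2(1-p^{\alpha+\beta+3+2k})}\,b_{k-1}(\mu).$$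 *)

(* Defs.v *)
From Stdlib Require Import Reals.
From Coquelicot Require Import Coquelicot.
Open Scope R_scope.

Definition rpow (p x : R) : R := Rpower p x.

Fixpoint qpoch (p a : R) (n : nat) : R :=
  match n with
  | O => 1
  | S m => qpoch p a m * (1 - a * p ^ m)
  end.

Definition phi43_term (a1 a2 a3 a4 b1 b2 b3 p z : R) (k : nat) : R :=
  (qpoch p a1 k * qpoch p a2 k * qpoch p a3 k * qpoch p a4 k)
  / (qpoch p p k * qpoch p b1 k * qpoch p b2 k * qpoch p b3 k) * z ^ k.

Definition phi43 (a1 a2 a3 a4 b1 b2 b3 p z : R) : R :=
  Series (phi43_term a1 a2 a3 a4 b1 b2 b3 p z).

Definition rec_c (p al be : R) (k : nat) : R :=
  let K := INR k in
  (1 - rpow p (be - al)) * (1 + rpow p (al + be + 3 + 2 * K))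
  / ((1 - rpow p (al + be + 2 + 2 * K)) * (1 - rpow p (al + be + 4 + 2 * K)))
  * rpow p (al + 3 / 2 + K).

Definition rec_d (p al be : R) (k : nat) : R :=
  let K := INR k in
  (1 - rpow p (2 * al + 2 + 2 * K)) * (1 - rpow p (2 * be + 2 + 2 * K))
  * rpow p (2 * K + al + be + 2)
  / ((1 - rpow p (al + be + 1 + 2 * K)) * (1 - rpow p (al + be + 2 + 2 * K)) ^ 2
     * (1 - rpow p (al + be + 3 + 2 * K))).

(* pair (b_{k-1}(mu), b_k(mu)), with b_{-1} = 0, b_0 = 1 *)
Fixpoint bpair (p al be : R) (mu : C) (k : nat) : C * C :=
  match k with
  | O => (RtoC 0, RtoC 1)
  | S m =>
      let '(bm1, bm) := bpair p al be mu m in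
      (bm, Cplus (Cmult (Cplus mu (RtoC (rec_c p al be m))) bm)
                 (Cmult (RtoC (rec_d p al be m)) bm1))
  end.

Definition bpoly (p al be : R) (n : nat) (mu : C) : C := snd (bpair p al be mu n).

Fixpoint Cpow (z : C) (n : nat) : C :=
  match n with O => RtoC 1 | S m => Cmult (Cpow z m) z end.

Fixpoint Csum (f : nat -> C) (n : nat) : C :=
  match n with O => f O | S m => Cplus (Csum f m) (f (S m)) end.

Definition rhs_term (p al be : R) (n : nat) (mu : C) (j : nat) : C :=
  let N := INR n in let J := INR j in
  Cmult (RtoC (
    qpoch p (rpow p (- be - N - 1)) j * qpoch p (- rpow p (- al - N - 1)) j
    / (qpoch p p j * qpoch p (rpow p (- 2 * N - al - be - 2)) j)
    * (-1) ^ j * rpow p (J / 2)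
    * phi43 (rpow p (- J)) (rpow p (2 * N + al + be + 3 - J)) (rpow p (be + 1))
            (- rpow p (al + 1))
            (rpow p (al + be + 2)) (rpow p (N + be + 2 - J)) (- rpow p (al + N + 2 - J))
            p p))
   (Cpow mu (n - j)).

(* Main.v *)
Require Import Defs.
From Stdlib Require Import Reals Lra Lia Field.
From Coquelicot Require Import Coquelicot.
Open Scope R_scope.

Lemma qpoch_S_left p x k : qpoch p x (S k) = (1 - x) * qpoch p (x * p) k.
Proof.
  revert x; induction k as [|k IH]; intros x; simpl.
  - ring.
  - simpl in IH. rewrite IH. ring.
Qed.

Lemma qpoch_zero p x k i : (i < k)%nat -> 1 - x * p ^ i = 0 -> qpoch p x k = 0.
Proof.
  induction k as [|k IH]; intros Hik H; [exfalso; apply (Nat.nlt_0_r i); exact Hik|].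
  simpl. destruct (Nat.eq_dec i k) as [->|Hne].
  - rewrite H; ring.
  - rewrite IH; [ring|lia|exact H].
Qed.

Lemma qpoch_nz p x k : (forall i, (i < k)%nat -> 1 - x * p ^ i <> 0) -> qpoch p x k <> 0.
Proof.
  induction k as [|k IH]; intros H; simpl.
  - lra.
  - apply Rmult_integral_contrapositive_currified; auto.
Qed.

Lemma rpow_plus p x y : rpow p (x + y) = rpow p x * rpow p y.
Proof. unfold rpow; apply Rpower_plus. Qed.
Lemma rpow_nat p n : 0 < p -> rpow p (INR n) = p ^ n.
Proof. unfold rpow; apply Rpower_pow. Qed.
Lemma rpow_pos p x : 0 < rpow p x.
Proof. unfold rpow, Rpower; apply exp_pos. Qed.
Lemma rpow_0 p : rpow p 0 = 1.
Proof. unfold rpow, Rpower. rewrite Rmult_0_l. apply exp_0. Qed.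
Lemma ln_neg p : 0 < p < 1 -> ln p < 0.
Proof. intros Hp. rewrite <- ln_1; apply ln_increasing; lra. Qed.
Lemma rpow_lt1 p x : 0 < p < 1 -> 0 < x -> rpow p x < 1.
Proof.
  intros Hp Hx. unfold rpow, Rpower. rewrite <- exp_0. apply exp_increasing.
  generalize (ln_neg p Hp); nra.
Qed.
Lemma rpow_gt1 p x : 0 < p < 1 -> x < 0 -> 1 < rpow p x.
Proof.
  intros Hp Hx. unfold rpow, Rpower. rewrite <- exp_0. apply exp_increasing.
  generalize (ln_neg p Hp); nra.
Qed.
Lemma rp_ne1 p x : 0 < p < 1 -> x <> 0 -> 1 - rpow p x <> 0.
Proof.
  intros Hp Hx. destruct (Rlt_or_le x 0) as [H|H].
  - generalize (rpow_gt1 p x Hp H); lra.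
  - assert (0 < x) by lra. generalize (rpow_lt1 p x Hp H0); lra.
Qed.
Lemma rp_neq p x y : 0 < p < 1 -> x <> y -> rpow p x - rpow p y <> 0.
Proof.
  intros Hp Hxy E. unfold rpow, Rpower in E.
  assert (exp (x * ln p) = exp (y * ln p)) by lra.
  apply exp_inv in H. generalize (ln_neg p Hp); intros. apply Hxy.
  apply Rmult_eq_reg_r with (ln p); lra.
Qed.

Lemma exp_pow_l x n : exp x ^ n = exp (INR n * x).
Proof.
  induction n as [|n IH].
  - simpl. rewrite Rmult_0_l, exp_0. reflexivity.
  - rewrite <- tech_pow_Rmult, IH, S_INR, <- exp_plus. f_equal; ring.
Qed.
Lemma exp_inv' x : / exp x = exp (- x).
Proof. rewrite exp_Ropp. reflexivity. Qed.
Lemma exp_eq x y : x = y -> exp x = exp y.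
Proof. intros ->; reflexivity. Qed.
Lemma Ropp_eq' x y : x = y -> - x = - y.
Proof. intros ->; reflexivity. Qed.
Ltac rpw Hp :=
  let HL := fresh "HL" in let L := fresh "L" in
  repeat rewrite S_INR;
  unfold rpow, Rpower, Rdiv;
  pose proof (exp_ln _ Hp) as HL; set (L := ln _) in *; clearbody L;
  try rewrite <- HL;
  repeat rewrite Ropp_mult_distr_l_reverse;
  repeat (rewrite exp_pow_l || rewrite <- exp_plus || rewrite exp_inv');
  first [apply exp_eq | apply Ropp_eq'; apply exp_eq]; repeat rewrite S_INR; simpl INR; field.

Lemma nzA p x i : 0 < p < 1 -> x + INR i <> 0 -> 1 - rpow p x * p ^ i <> 0.
Proof.
  intros Hp H. rewrite <- rpow_nat by lra. rewrite <- rpow_plus. apply rp_ne1; auto.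
Qed.
Lemma nzB p x i : 0 < p -> 1 - - rpow p x * p ^ i <> 0.
Proof.
  intros Hp. generalize (rpow_pos p x) (pow_lt p i Hp). nra.
Qed.
Lemma nzP p i : 0 < p < 1 -> 1 - p * p ^ i <> 0.
Proof.
  intros Hp. replace (p * p ^ i) with (p ^ S i) by (simpl; ring).
  rewrite <- rpow_nat by lra. apply rp_ne1; auto. rewrite S_INR.
  generalize (pos_INR i); lra.
Qed.

Lemma series_finite_aux (f : nat -> R) j N : (forall k, (j < k)%nat -> f k = 0) -> (j <= N)%nat ->
  sum_f_R0 f N = sum_f_R0 f j.
Proof.
  intros H. induction N as [|N IH]; intros HN.
  - replace j with 0%nat by lia. reflexivity.
  - destruct (Nat.eq_dec j (S N)) as [->|Hne]; [reflexivity|].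
    rewrite tech5, IH by lia. rewrite (H (S N)) by lia. ring.
Qed.
Lemma series_finite (f : nat -> R) j : (forall k, (j < k)%nat -> f k = 0) -> Series f = sum_f_R0 f j.
Proof.
  intros H. apply is_series_unique. unfold is_series.
  apply filterlim_ext_loc with (f := fun _ => sum_f_R0 f j).
  - exists j. intros N HN. rewrite sum_n_Reals. symmetry. apply series_finite_aux; auto.
  - apply filterlim_const.
Qed.

Definition uu p al be k :=
  qpoch p (rpow p (be + 1)) k * qpoch p (- rpow p (al + 1)) k
  / (qpoch p p k * qpoch p (rpow p (al + be + 2)) k) * rpow p (INR k / 2).
Definition vv p al be n m :=
  qpoch p (rpow p (- be - INR n - 1)) m * qpoch p (- rpow p (- al - INR n - 1)) m
  / (qpoch p p m * qpoch p (rpow p (- 2 * INR n - al - be - 2)) m)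
  * (-1) ^ m * rpow p (INR m / 2).
Definition TT p al be n j k :=
  phi43_term (rpow p (- INR j)) (rpow p (2 * INR n + al + be + 3 - INR j)) (rpow p (be + 1))
            (- rpow p (al + 1))
            (rpow p (al + be + 2)) (rpow p (INR n + be + 2 - INR j)) (- rpow p (al + INR n + 2 - INR j))
            p p k.
Definition PHI p al be n j :=
  phi43 (rpow p (- INR j)) (rpow p (2 * INR n + al + be + 3 - INR j)) (rpow p (be + 1))
            (- rpow p (al + 1))
            (rpow p (al + be + 2)) (rpow p (INR n + be + 2 - INR j)) (- rpow p (al + INR n + 2 - INR j))
            p p.

Lemma rhs_term_eq p al be n mu j :
  rhs_term p al be n mu j = Cmult (RtoC (vv p al be n j * PHI p al be n j)) (Defs.Cpow mu (n - j)).
Proof. reflexivity. Qed.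

Lemma PHI_fin p al be n j : 0 < p -> PHI p al be n j = sum_f_R0 (TT p al be n j) j.
Proof.
  intros Hp. unfold PHI, phi43. apply series_finite. intros k Hk.
  unfold TT, phi43_term. rewrite (qpoch_zero p (rpow p (- INR j)) k j Hk).
  - unfold Rdiv; ring.
  - rewrite <- rpow_nat by lra. rewrite <- rpow_plus. replace (- INR j + INR j) with 0 by ring.
    rewrite rpow_0; ring.
Qed.

Lemma phi43_term_S a1 a2 a3 a4 b1 b2 b3 p z k :
  qpoch p p k <> 0 -> qpoch p b1 k <> 0 -> qpoch p b2 k <> 0 -> qpoch p b3 k <> 0 ->
  1 - p * p ^ k <> 0 -> 1 - b1 * p ^ k <> 0 -> 1 - b2 * p ^ k <> 0 -> 1 - b3 * p ^ k <> 0 ->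
  phi43_term a1 a2 a3 a4 b1 b2 b3 p z (S k) =
  phi43_term a1 a2 a3 a4 b1 b2 b3 p z k *
  ((1 - a1 * p ^ k) * (1 - a2 * p ^ k) * (1 - a3 * p ^ k) * (1 - a4 * p ^ k)
   / ((1 - p * p ^ k) * (1 - b1 * p ^ k) * (1 - b2 * p ^ k) * (1 - b3 * p ^ k)) * z).
Proof.
  intros. unfold phi43_term. cbn [qpoch pow]. field. repeat split; auto.
Qed.

Lemma rpow_half_S p k : rpow p (INR (S k) / 2) = rpow p (INR k / 2) * rpow p (1 / 2).
Proof. rewrite S_INR, <- rpow_plus. f_equal. field. Qed.

Lemma uu_S p al be k :
  qpoch p p k <> 0 -> qpoch p (rpow p (al + be + 2)) k <> 0 ->
  1 - p * p ^ k <> 0 -> 1 - rpow p (al + be + 2) * p ^ k <> 0 ->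
  uu p al be (S k) = uu p al be k *
   ((1 - rpow p (be + 1) * p ^ k) * (1 - - rpow p (al + 1) * p ^ k)
    / ((1 - p * p ^ k) * (1 - rpow p (al + be + 2) * p ^ k)) * rpow p (1 / 2)).
Proof.
  intros. unfold uu. rewrite rpow_half_S. cbn [qpoch]. field. repeat split; auto.
Qed.

Lemma vv_S p al be n m :
  qpoch p p m <> 0 -> qpoch p (rpow p (- 2 * INR n - al - be - 2)) m <> 0 ->
  1 - p * p ^ m <> 0 -> 1 - rpow p (- 2 * INR n - al - be - 2) * p ^ m <> 0 ->
  vv p al be n (S m) = vv p al be n m *
   ((1 - rpow p (- be - INR n - 1) * p ^ m) * (1 - - rpow p (- al - INR n - 1) * p ^ m)
    / ((1 - p * p ^ m) * (1 - rpow p (- 2 * INR n - al - be - 2) * p ^ m)) * (-1) * rpow p (1 / 2)).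
Proof.
  intros. unfold vv. rewrite rpow_half_S. cbn [qpoch pow]. field. repeat split; auto.
Qed.

Lemma algB p s a b N K M xB xC xD x1 x2 x3 x4 x5 x6 x7 :
  xB = / (b * p * N) -> xC = / (a * p * N) -> xD = / (a * b * p * p * N * N) ->
  x1 = / (K * M * p) -> x2 = a * b * p * p * p * N * N / (K * M * p) ->
  x3 = b * p -> x4 = a * p -> x5 = a * b * p * p ->
  x6 = b * p * p * N / (K * M * p) -> x7 = a * p * p * N / (K * M * p) ->
  p <> 0 -> a <> 0 -> b <> 0 -> N <> 0 -> K <> 0 -> M <> 0 ->
  1 - a * b * p * p * K <> 0 -> 1 - p * K <> 0 -> M - - (a * p * N) <> 0 ->
  M - b * p * N <> 0 -> a * b * p * p * N * N - M <> 0 -> 1 - p * M <> 0 ->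
  ((1 - xB * M) * (1 - - xC * M) / ((1 - p * M) * (1 - xD * M)) * (-1) * s) *
  ((1 - x1 * K) * (1 - x2 * K) * (1 - x3 * K) * (1 - - x4 * K) /
    ((1 - p * K) * (1 - x5 * K) * (1 - x6 * K) * (1 - - x7 * K)) * p)
  = (1 - x3 * K) * (1 - - x4 * K) / ((1 - p * K) * (1 - x5 * K)) * s.
Proof.
  intros -> -> -> -> -> -> -> -> -> -> **. field. repeat split; assumption.
Qed.


Lemma TT_nz p al be n j k : 0 < p < 1 -> -1 < al -> -1 < be -> (k <= j)%nat -> (j <= S n)%nat ->
  qpoch p p k <> 0 /\ qpoch p (rpow p (al + be + 2)) k <> 0 /\
  qpoch p (rpow p (INR n + be + 2 - INR j)) k <> 0 /\
  qpoch p (- rpow p (al + INR n + 2 - INR j)) k <> 0 /\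
  1 - p * p ^ k <> 0 /\ 1 - rpow p (al + be + 2) * p ^ k <> 0 /\
  1 - rpow p (INR n + be + 2 - INR j) * p ^ k <> 0 /\
  1 - - rpow p (al + INR n + 2 - INR j) * p ^ k <> 0.
Proof.
  intros Hp Hal Hbe Hkj Hjn.
  assert (HJ : INR j <= INR n + 1) by (rewrite <- S_INR; apply le_INR; auto).
  repeat split.
  - apply qpoch_nz; intros; apply nzP; auto.
  - apply qpoch_nz; intros; apply nzA; auto. generalize (pos_INR i); lra.
  - apply qpoch_nz; intros; apply nzA; auto. generalize (pos_INR i); lra.
  - apply qpoch_nz; intros; apply nzB; lra.
  - apply nzP; auto.
  - apply nzA; auto. generalize (pos_INR k); lra.
  - apply nzA; auto. generalize (pos_INR k); lra.
  - apply nzB; lra.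
Qed.

Lemma vv_nz p al be n m : 0 < p < 1 -> -1 < al -> -1 < be -> (m <= S n)%nat ->
  qpoch p p m <> 0 /\ qpoch p (rpow p (- 2 * INR n - al - be - 2)) m <> 0.
Proof.
  intros Hp Hal Hbe Hm. split.
  - apply qpoch_nz; intros; apply nzP; auto.
  - apply qpoch_nz; intros; apply nzA; auto.
    assert (INR i <= INR n) by (apply le_INR; lia). generalize (pos_INR n); lra.
Qed.

Lemma stepB p al be n j k : 0 < p < 1 -> -1 < al -> -1 < be -> (k <= j)%nat -> (j <= S n)%nat ->
  vv p al be n j * TT p al be n j k = uu p al be k * vv p al be n (j - k).
Proof.
  intros Hp Hal Hbe. induction k as [|k IH]; intros Hkj Hjn.
  - unfold TT, phi43_term, uu. cbn [qpoch pow INR]. replace (0/2) with 0 by field.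
    rewrite rpow_0, Nat.sub_0_r. field.
  - set (m := (j - S k)%nat).
    assert (Hm : (j - k = S m)%nat) by (unfold m; lia).
    assert (Hj : INR j = INR k + INR m + 1).
    { replace j with (S (k + m)) by (unfold m; lia). rewrite S_INR, plus_INR. ring. }
    assert (Hmn : (m <= n)%nat) by (unfold m; lia).
    specialize (IH ltac:(lia) Hjn). rewrite Hm in IH.
    destruct (TT_nz p al be n j k Hp Hal Hbe ltac:(lia) Hjn) as (T1 & T2 & T3 & T4 & T5 & T6 & T7 & T8).
    destruct (vv_nz p al be n m Hp Hal Hbe ltac:(lia)) as (V1 & V2).
    assert (V3 : 1 - p * p ^ m <> 0) by (apply nzP; auto).
    assert (V4 : 1 - rpow p (- 2 * INR n - al - be - 2) * p ^ m <> 0).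
    { apply nzA; auto. assert (INR m <= INR n) by (apply le_INR; lia). generalize (pos_INR n); lra. }
    rewrite vv_S in IH by auto.
    unfold TT at 1. rewrite phi43_term_S by auto. fold (TT p al be n j k).
    rewrite uu_S by auto.
    assert (Hpos : 0 < p) by lra.
    rewrite <- (algB p (rpow p (1/2)) (rpow p al) (rpow p be) (p ^ n) (p ^ k) (p ^ m)
      (rpow p (- be - INR n - 1)) (rpow p (- al - INR n - 1)) (rpow p (- 2 * INR n - al - be - 2))
      (rpow p (- INR j)) (rpow p (2 * INR n + al + be + 3 - INR j)) (rpow p (be + 1))
      (rpow p (al + 1)) (rpow p (al + be + 2)) (rpow p (INR n + be + 2 - INR j))
      (rpow p (al + INR n + 2 - INR j))).
    + transitivity ((vv p al be n j * TT p al be n j k) *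
       ((1 - rpow p (- INR j) * p ^ k) * (1 - rpow p (2 * INR n + al + be + 3 - INR j) * p ^ k) *
        (1 - rpow p (be + 1) * p ^ k) * (1 - - rpow p (al + 1) * p ^ k) /
        ((1 - p * p ^ k) * (1 - rpow p (al + be + 2) * p ^ k) *
         (1 - rpow p (INR n + be + 2 - INR j) * p ^ k) *
         (1 - - rpow p (al + INR n + 2 - INR j) * p ^ k)) * p)); [ring|].
      rewrite IH. ring.
    + rpw Hpos.
    + rpw Hpos.
    + rpw Hpos.
    + rewrite Hj; rpw Hpos.
    + rewrite Hj; rpw Hpos.
    + rpw Hpos.
    + rpw Hpos.
    + rpw Hpos.
    + rewrite Hj; rpw Hpos.
    + rewrite Hj; rpw Hpos.
    + lra.
    + generalize (rpow_pos p al); lra.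
    + generalize (rpow_pos p be); lra.
    + apply pow_nonzero; lra.
    + apply pow_nonzero; lra.
    + apply pow_nonzero; lra.
    + replace (rpow p al * rpow p be * p * p * p ^ k) with (rpow p (al + be + 2 + INR k)) by rpw Hpos.
      apply rp_ne1; auto. generalize (pos_INR k); lra.
    + apply nzP; auto.
    + generalize (pow_lt p m Hpos) (rpow_pos p al) (pow_lt p n Hpos). intros.
      assert (0 < rpow p al * p * p ^ n) by (repeat apply Rmult_lt_0_compat; lra). lra.
    + replace (p ^ m) with (rpow p (INR m)) by rpw Hpos.
      replace (rpow p be * p * p ^ n) with (rpow p (be + 1 + INR n)) by rpw Hpos.
      apply rp_neq; auto. assert (INR m <= INR n) by (apply le_INR; lia). lra.
    + replace (p ^ m) with (rpow p (INR m)) by rpw Hpos.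
      replace (rpow p al * rpow p be * p * p * p ^ n * p ^ n) with (rpow p (al + be + 2 + 2 * INR n)) by rpw Hpos.
      apply rp_neq; auto. assert (INR m <= INR n) by (apply le_INR; lia). generalize (pos_INR n). lra.
    + apply nzP; auto.
Qed.

Lemma algC1 p s a b Nn B0 C0 D0 B1 C1 D1 c :
  p = s * s ->
  B0 = / (b * p * Nn) -> C0 = / (a * p * Nn) -> D0 = / (a * b * p * p * Nn * Nn) ->
  B1 = / (b * p * p * Nn) -> C1 = / (a * p * p * Nn) -> D1 = / (a * b * p * p * p * p * Nn * Nn) ->
  c = (1 - b / a) * (1 + a * b * p * p * p * Nn * Nn)
      / ((1 - a * b * p * p * Nn * Nn) * (1 - a * b * p * p * p * p * Nn * Nn)) * (a * p * s * Nn) ->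
  s <> 0 -> a <> 0 -> b <> 0 -> Nn <> 0 -> 1 - p <> 0 ->
  1 - a * b * p * p * Nn * Nn <> 0 -> 1 - a * b * p * p * p * p * Nn * Nn <> 0 ->
  a * b * p * p * Nn * Nn - 1 <> 0 -> a * b * p * p * p * p * Nn * Nn - 1 <> 0 ->
  (1 - B1) * (1 - - C1) / ((1 - p) * (1 - D1)) * (-1) * s =
  (1 - B0) * (1 - - C0) / ((1 - p) * (1 - D0)) * (-1) * s + c.
Proof.
  intros -> -> -> -> -> -> -> -> **. field. repeat split; auto; rewrite <- ?Rmult_assoc; auto; rewrite ?Rmult_assoc; auto.
Qed.

Lemma algC2 p s a b Nn M QB QC QD QP S1 S2 B0 C0 B1 C1 D1 B2 C2 D2 c d :
  p = s * s ->
  B0 = / (b * Nn) -> C0 = / (a * Nn) ->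
  B1 = / (b * p * Nn) -> C1 = / (a * p * Nn) -> D1 = / (a * b * p * p * Nn * Nn) ->
  B2 = / (b * p * p * Nn) -> C2 = / (a * p * p * Nn) -> D2 = / (a * b * p * p * p * p * Nn * Nn) ->
  c = (1 - b / a) * (1 + a * b * p * p * p * Nn * Nn)
      / ((1 - a * b * p * p * Nn * Nn) * (1 - a * b * p * p * p * p * Nn * Nn)) * (a * p * s * Nn) ->
  d = (1 - a * a * p * p * Nn * Nn) * (1 - b * b * p * p * Nn * Nn) * (Nn * Nn * a * b * p * p)
      / ((1 - a * b * p * Nn * Nn) * (1 - a * b * p * p * Nn * Nn) ^ 2 * (1 - a * b * p * p * p * Nn * Nn)) ->
  Nn <> 0 -> s <> 0 -> b <> 0 -> a <> 0 ->
  a * b * p * Nn * Nn - M <> 0 -> a * b * p * p * Nn * Nn - M <> 0 -> QD <> 0 -> QP <> 0 ->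
  1 - a * b * p * p * p * Nn * Nn <> 0 -> 1 - a * b * p * p * Nn * Nn <> 0 ->
  1 - a * b * p * Nn * Nn <> 0 -> 1 - p * M <> 0 -> 1 - a * b * p * p * p * p * Nn * Nn <> 0 ->
  1 - p * p * M <> 0 -> a * b * p * p * p * Nn * Nn - 1 <> 0 -> a * b * p * p * p * p * Nn * Nn - 1 <> 0 ->
  (1 - B2) * (1 - B1) * (1 - - C2) * (1 - - C1) * QB * QC
    / (QP * (1 - p * M) * (1 - p * p * M) * (1 - D2) * (1 - D2 * p) * QD) * S1 * S2 * (s * s) =
  (1 - B1) * (1 - B1 * p * M) * (1 - - C1) * (1 - - C1 * p * M) * QB * QC
    / (QP * (1 - p * M) * (1 - p * p * M) * QD * (1 - D1 * M) * (1 - D1 * p * M)) * S1 * S2 * (s * s)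
  + c * ((1 - B1) * (1 - - C1) * QB * QC / (QP * (1 - p * M) * QD * (1 - D1 * M)) * S1 * S2 * (- s))
  + d * (QB * QC * (1 - D1) * (1 - D1 * p) / (QP * QD * (1 - D1 * M) * (1 - D1 * p * M)) * S1 * S2).
Proof.
  intros Hps -> -> -> -> -> -> -> -> -> -> **. subst p. field. repeat split; assumption.
Qed.

Definition VV p B C D m := qpoch p B m * qpoch p C m / (qpoch p p m * qpoch p D m) * (-1) ^ m * rpow p (INR m / 2).
Lemma vv_VV p al be n m : vv p al be n m =
  VV p (rpow p (- be - INR n - 1)) (- rpow p (- al - INR n - 1)) (rpow p (- 2 * INR n - al - be - 2)) m.
Proof. reflexivity. Qed.
Lemma qpoch_Sr p x k : qpoch p x (S k) = qpoch p x k * (1 - x * p ^ k).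
Proof. reflexivity. Qed.

Lemma E1 p X0 X1 X2 Y0 Y1 Y2 D1 D2 m :
  X2 * p = X1 -> X1 * p = X0 -> Y2 * p = Y1 -> Y1 * p = Y0 -> D2 * p * p = D1 ->
  qpoch p p m <> 0 -> qpoch p D1 m <> 0 -> 1 - p * p ^ m <> 0 -> 1 - p * (p * p ^ m) <> 0 ->
  1 - D2 <> 0 -> 1 - D2 * p <> 0 ->
  VV p X2 Y2 D2 (S (S m)) = (1 - X2) * (1 - X1) * (1 - Y2) * (1 - Y1) * qpoch p X0 m * qpoch p Y0 m
    / (qpoch p p m * (1 - p * p ^ m) * (1 - p * p * p ^ m) * (1 - D2) * (1 - D2 * p) * qpoch p D1 m)
    * (-1) ^ m * rpow p (INR m / 2) * (rpow p (1 / 2) * rpow p (1 / 2)).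
Proof.
  intros HX2 HX1 HY2 HY1 HD **. unfold VV.
  rewrite (qpoch_S_left p X2), HX2, (qpoch_S_left p X1), HX1.
  rewrite (qpoch_S_left p Y2), HY2, (qpoch_S_left p Y1), HY1.
  rewrite (qpoch_S_left p D2 (S m)), (qpoch_S_left p (D2 * p)), HD.
  rewrite !rpow_half_S. cbn [qpoch pow]. field. repeat split; auto; rewrite <- ?Rmult_assoc; auto; rewrite ?Rmult_assoc; auto.
Qed.

Lemma E2 p X0 X1 Y0 Y1 D1 m :
  X1 * p = X0 -> Y1 * p = Y0 ->
  qpoch p p m <> 0 -> qpoch p D1 m <> 0 -> 1 - p * p ^ m <> 0 -> 1 - p * (p * p ^ m) <> 0 ->
  1 - D1 * p ^ m <> 0 -> 1 - D1 * (p * p ^ m) <> 0 ->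
  VV p X1 Y1 D1 (S (S m)) = (1 - X1) * (1 - X1 * p * p ^ m) * (1 - Y1) * (1 - Y1 * p * p ^ m)
    * qpoch p X0 m * qpoch p Y0 m
    / (qpoch p p m * (1 - p * p ^ m) * (1 - p * p * p ^ m) * qpoch p D1 m * (1 - D1 * p ^ m) * (1 - D1 * p * p ^ m))
    * (-1) ^ m * rpow p (INR m / 2) * (rpow p (1 / 2) * rpow p (1 / 2)).
Proof.
  intros HX1 HY1 **. unfold VV. subst X0 Y0.
  rewrite (qpoch_Sr p X1 (S m)), (qpoch_S_left p X1).
  rewrite (qpoch_Sr p Y1 (S m)), (qpoch_S_left p Y1).
  rewrite !rpow_half_S. cbn [qpoch pow]. field. repeat split; auto; rewrite <- ?Rmult_assoc; auto; rewrite ?Rmult_assoc; auto.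
Qed.

Lemma E3 p X0 X1 Y0 Y1 D1 m :
  X1 * p = X0 -> Y1 * p = Y0 ->
  qpoch p p m <> 0 -> qpoch p D1 m <> 0 -> 1 - p * p ^ m <> 0 -> 1 - D1 * p ^ m <> 0 ->
  VV p X1 Y1 D1 (S m) = (1 - X1) * (1 - Y1) * qpoch p X0 m * qpoch p Y0 m
    / (qpoch p p m * (1 - p * p ^ m) * qpoch p D1 m * (1 - D1 * p ^ m))
    * (-1) ^ m * rpow p (INR m / 2) * (- rpow p (1 / 2)).
Proof.
  intros HX1 HY1 **. unfold VV. subst X0 Y0.
  rewrite (qpoch_S_left p X1), (qpoch_S_left p Y1).
  rewrite !rpow_half_S. cbn [qpoch pow]. field. repeat split; auto; rewrite <- ?Rmult_assoc; auto; rewrite ?Rmult_assoc; auto.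
Qed.

Lemma E4 p X0 Y0 D0 D1 m :
  D1 * p * p = D0 ->
  qpoch p p m <> 0 -> qpoch p D1 m <> 0 -> 1 - D1 * p ^ m <> 0 -> 1 - D1 * (p * p ^ m) <> 0 ->
  1 - D1 <> 0 -> 1 - D1 * p <> 0 ->
  VV p X0 Y0 D0 m = qpoch p X0 m * qpoch p Y0 m * (1 - D1) * (1 - D1 * p)
    / (qpoch p p m * qpoch p D1 m * (1 - D1 * p ^ m) * (1 - D1 * p * p ^ m))
    * (-1) ^ m * rpow p (INR m / 2).
Proof.
  intros HD **. unfold VV.
  assert (E : qpoch p D1 (S (S m)) = (1 - D1) * (1 - D1 * p) * qpoch p D0 m).
  { rewrite (qpoch_S_left p D1), (qpoch_S_left p (D1 * p)), HD. ring. }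
  assert (E' : qpoch p D0 m = qpoch p D1 m * (1 - D1 * p ^ m) * (1 - D1 * (p * p ^ m)) / ((1 - D1) * (1 - D1 * p))).
  { cbn [qpoch pow] in E. rewrite E. field. split; auto. }
  rewrite E'. field. repeat split; auto; rewrite <- ?Rmult_assoc; auto; rewrite ?Rmult_assoc; auto.
Qed.

Definition sh (g : nat -> R) (j : nat) : R := match j with O => 0 | S j' => g j' end.

Lemma vv0 p al be n : vv p al be n 0 = 1.
Proof. unfold vv. cbn [qpoch pow INR]. replace (0 / 2) with 0 by field. rewrite rpow_0. field. Qed.

Lemma vv1 p al be n : 0 < p < 1 -> -1 < al -> -1 < be ->
  vv p al be n 1 = (1 - rpow p (- be - INR n - 1)) * (1 - - rpow p (- al - INR n - 1))
     / ((1 - p) * (1 - rpow p (- 2 * INR n - al - be - 2))) * (-1) * rpow p (1 / 2).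
Proof.
  intros Hp Hal Hbe. unfold vv. cbn [qpoch pow INR]. replace (1 / 2) with (1 / 2) by reflexivity.
  assert (1 - p <> 0) by lra.
  assert (1 - rpow p (- 2 * INR n - al - be - 2) <> 0) by (apply rp_ne1; auto; generalize (pos_INR n); lra).
  field. auto.
Qed.

Lemma rp_ne1b p x : 0 < p < 1 -> x <> 0 -> rpow p x - 1 <> 0.
Proof. intros Hp Hx H. apply (rp_ne1 p x Hp Hx). lra. Qed.

Lemma rec_c_eq p al be n : 0 < p ->
  rec_c p al be n = (1 - rpow p be / rpow p al) * (1 + rpow p al * rpow p be * p * p * p * p ^ n * p ^ n)
      / ((1 - rpow p al * rpow p be * p * p * p ^ n * p ^ n) * (1 - rpow p al * rpow p be * p * p * p * p * p ^ n * p ^ n))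
      * (rpow p al * p * rpow p (1 / 2) * p ^ n).
Proof.
  intros Hp. unfold rec_c. cbv zeta.
  replace (rpow p (be - al)) with (rpow p be / rpow p al) by rpw Hp.
  replace (rpow p (al + be + 3 + 2 * INR n)) with (rpow p al * rpow p be * p * p * p * p ^ n * p ^ n) by rpw Hp.
  replace (rpow p (al + be + 2 + 2 * INR n)) with (rpow p al * rpow p be * p * p * p ^ n * p ^ n) by rpw Hp.
  replace (rpow p (al + be + 4 + 2 * INR n)) with (rpow p al * rpow p be * p * p * p * p * p ^ n * p ^ n) by rpw Hp.
  replace (rpow p (al + 3 / 2 + INR n)) with (rpow p al * p * rpow p (1 / 2) * p ^ n) by rpw Hp.
  reflexivity.
Qed.

Lemma rec_d_eq p al be n : 0 < p ->
  rec_d p al be n = (1 - rpow p al * rpow p al * p * p * p ^ n * p ^ n) * (1 - rpow p be * rpow p be * p * p * p ^ n * p ^ n)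
     * (p ^ n * p ^ n * rpow p al * rpow p be * p * p)
      / ((1 - rpow p al * rpow p be * p * p ^ n * p ^ n) * (1 - rpow p al * rpow p be * p * p * p ^ n * p ^ n) ^ 2
         * (1 - rpow p al * rpow p be * p * p * p * p ^ n * p ^ n)).
Proof.
  intros Hp. unfold rec_d. cbv zeta.
  replace (rpow p (2 * al + 2 + 2 * INR n)) with (rpow p al * rpow p al * p * p * p ^ n * p ^ n) by rpw Hp.
  replace (rpow p (2 * be + 2 + 2 * INR n)) with (rpow p be * rpow p be * p * p * p ^ n * p ^ n) by rpw Hp.
  replace (rpow p (2 * INR n + al + be + 2)) with (p ^ n * p ^ n * rpow p al * rpow p be * p * p) by rpw Hp.
  replace (rpow p (al + be + 1 + 2 * INR n)) with (rpow p al * rpow p be * p * p ^ n * p ^ n) by rpw Hp.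
  replace (rpow p (al + be + 2 + 2 * INR n)) with (rpow p al * rpow p be * p * p * p ^ n * p ^ n) by rpw Hp.
  replace (rpow p (al + be + 3 + 2 * INR n)) with (rpow p al * rpow p be * p * p * p * p ^ n * p ^ n) by rpw Hp.
  reflexivity.
Qed.

Ltac expo p E :=
  match E with
  | rpow p ?x => constr:(x)
  | p => constr:(1)
  | p ^ ?k => constr:(INR k)
  | ?A * ?B => let x := expo p A in let y := expo p B in constr:(x + y)
  end.
Ltac ne1 p Hp Hp0 :=
  match goal with
  | |- 1 - ?E <> 0 => let x := expo p E in
       replace E with (rpow p x) by rpw Hp0; apply rp_ne1; [exact Hp|]; rewrite ?S_INR; lra
  | |- ?E - 1 <> 0 => let x := expo p E in
       replace E with (rpow p x) by rpw Hp0; apply rp_ne1b; [exact Hp|]; rewrite ?S_INR; lra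
  | |- ?E - ?F <> 0 => let x := expo p E in let y := expo p F in
       replace E with (rpow p x) by rpw Hp0; replace F with (rpow p y) by rpw Hp0;
       apply rp_neq; [exact Hp|]; rewrite ?S_INR; lra
  end.

Ltac sideC p Hp Hp0 :=
  first [ rpw Hp0
        | apply qpoch_nz; intros ?i ?Hi;
          match goal with Hi : (?i < ?k)%nat |- _ =>
            assert (INR i < INR k) by (apply lt_INR; exact Hi) end;
          first [apply nzP; exact Hp | apply nzA; [exact Hp|]; rewrite ?S_INR; lra ]
        | apply nzP; exact Hp
        | match goal with |- 1 - p * (p * p ^ ?m) <> 0 => apply (nzP p (S m)); exact Hp end
        | apply rp_ne1; [exact Hp|]; rewrite ?S_INR; lra
        | apply nzA; [exact Hp|]; rewrite ?S_INR; lra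
        | match goal with |- 1 - ?X * (p * p ^ ?m) <> 0 => apply (nzA p _ (S m)); [exact Hp|]; rewrite ?S_INR; lra end
        | match goal with |- 1 - rpow p ?X * p <> 0 =>
            replace (rpow p X * p) with (rpow p (X + 1)) by rpw Hp0; apply rp_ne1; [exact Hp|]; rewrite ?S_INR; lra end ].

Lemma vrec p al be n m : 0 < p < 1 -> -1 < al -> -1 < be -> (m <= S n)%nat ->
  vv p al be (S n) m = vv p al be n m + rec_c p al be n * sh (vv p al be n) m
                       + rec_d p al be n * sh (sh (vv p al be (n - 1))) m.
Proof.
  intros Hp Hal Hbe Hm. assert (Hp0 : 0 < p) by lra.
  assert (Ha : 0 < rpow p al) by apply rpow_pos.
  assert (Hb : 0 < rpow p be) by apply rpow_pos.
  assert (Hn : 0 <= INR n) by apply pos_INR.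
  destruct m as [|[|m']].
  - cbn [sh]. rewrite !vv0. ring.
  - cbn [sh]. rewrite vv0, !vv1 by auto. rewrite Rmult_0_r, Rplus_0_r, Rmult_1_r.
    apply (algC1 p (rpow p (1 / 2)) (rpow p al) (rpow p be) (p ^ n)).
    + rpw Hp0.
    + rpw Hp0.
    + rpw Hp0.
    + rpw Hp0.
    + rpw Hp0.
    + rpw Hp0.
    + rpw Hp0.
    + apply rec_c_eq; auto.
    + generalize (rpow_pos p (1/2)); lra.
    + lra.
    + lra.
    + apply pow_nonzero; lra.
    + lra.
    + replace (rpow p al * rpow p be * p * p * p ^ n * p ^ n) with (rpow p (al + be + 2 + 2 * INR n)) by rpw Hp0.
      apply rp_ne1; auto. generalize (pos_INR n); lra.
    + replace (rpow p al * rpow p be * p * p * p * p * p ^ n * p ^ n) with (rpow p (al + be + 4 + 2 * INR n)) by rpw Hp0.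
      apply rp_ne1; auto. generalize (pos_INR n); lra.
    + replace (rpow p al * rpow p be * p * p * p ^ n * p ^ n) with (rpow p (al + be + 2 + 2 * INR n)) by rpw Hp0.
      apply rp_ne1b; auto. generalize (pos_INR n); lra.
    + replace (rpow p al * rpow p be * p * p * p * p * p ^ n * p ^ n) with (rpow p (al + be + 4 + 2 * INR n)) by rpw Hp0.
      apply rp_ne1b; auto. generalize (pos_INR n); lra.
  - destruct n as [|n]; [lia|].
    replace (S n - 1)%nat with n by lia.
    cbn [sh].
    assert (Hmn : INR m' <= INR n) by (apply le_INR; lia).
    assert (Hn0 : 0 <= INR m') by apply pos_INR.
    rewrite !vv_VV.
    rewrite (E1 p (rpow p (- be - INR n - 1)) (rpow p (- be - INR (S n) - 1)) (rpow p (- be - INR (S (S n)) - 1))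
       (- rpow p (- al - INR n - 1)) (- rpow p (- al - INR (S n) - 1)) (- rpow p (- al - INR (S (S n)) - 1))
       (rpow p (- 2 * INR (S n) - al - be - 2)) (rpow p (- 2 * INR (S (S n)) - al - be - 2)) m').
    2-12: sideC p Hp Hp0.
    rewrite (E2 p (rpow p (- be - INR n - 1)) (rpow p (- be - INR (S n) - 1))
       (- rpow p (- al - INR n - 1)) (- rpow p (- al - INR (S n) - 1))
       (rpow p (- 2 * INR (S n) - al - be - 2)) m').
    2-9: sideC p Hp Hp0.
    rewrite (E3 p (rpow p (- be - INR n - 1)) (rpow p (- be - INR (S n) - 1))
       (- rpow p (- al - INR n - 1)) (- rpow p (- al - INR (S n) - 1))
       (rpow p (- 2 * INR (S n) - al - be - 2)) m').
    2-7: sideC p Hp Hp0.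
    rewrite (E4 p (rpow p (- be - INR n - 1)) (- rpow p (- al - INR n - 1))
       (rpow p (- 2 * INR n - al - be - 2)) (rpow p (- 2 * INR (S n) - al - be - 2)) m').
    2-8: sideC p Hp Hp0.
    apply (algC2 p (rpow p (1 / 2)) (rpow p al) (rpow p be) (p ^ S n) (p ^ m')) with (B0 := rpow p (- be - INR n - 1)) (C0 := rpow p (- al - INR n - 1)).
    all: try (rpw Hp0).
    all: try (apply rec_c_eq; exact Hp0).
    all: try (apply rec_d_eq; exact Hp0).
    all: try (apply pow_nonzero; lra).
    all: try (generalize (rpow_pos p (1/2)); lra).
    all: try lra.
    all: try (sideC p Hp Hp0).
    all: try (ne1 p Hp Hp0).
Qed.

Lemma qsum p x y K : (forall i, 1 - p * p ^ i <> 0) -> (forall i, 1 - x * y * p * p ^ i <> 0) ->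
  sum_f_R0 (fun k => qpoch p x k * qpoch p y k / (qpoch p p k * qpoch p (x * y * p) k) * p ^ k) K
  = qpoch p (x * p) K * qpoch p (y * p) K / (qpoch p p K * qpoch p (x * y * p) K).
Proof.
  intros H1 H2.
  assert (Q1 : forall k, qpoch p p k <> 0) by (intros; apply qpoch_nz; auto).
  assert (Q2 : forall k, qpoch p (x * y * p) k <> 0) by (intros; apply qpoch_nz; auto).
  induction K as [|K IH].
  - simpl. field.
  - rewrite tech5, IH.
    rewrite (qpoch_S_left p x K), (qpoch_S_left p y K).
    rewrite (qpoch_Sr p (x * p) K), (qpoch_Sr p (y * p) K), (qpoch_Sr p p K), (qpoch_Sr p (x * y * p) K).
    cbn [pow]. field. repeat split; auto.
Qed.

Definition conv p al be n j := sum_f_R0 (fun k => uu p al be k * vv p al be n (j - k)) j.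

Lemma sum_scal_l c (f : nat -> R) N : c * sum_f_R0 f N = sum_f_R0 (fun k => c * f k) N.
Proof. induction N as [|N IH]; simpl; [ring|]. rewrite <- IH. ring. Qed.

Lemma conv_eq p al be n j : 0 < p < 1 -> -1 < al -> -1 < be -> (j <= S n)%nat ->
  vv p al be n j * PHI p al be n j = conv p al be n j.
Proof.
  intros Hp Hal Hbe Hj. rewrite PHI_fin by lra. rewrite sum_scal_l. unfold conv.
  apply sum_eq. intros k Hk. apply stepB; auto.
Qed.

Lemma conv_top p al be n : 0 < p < 1 -> -1 < al -> -1 < be -> conv p al be n (S n) = 0.
Proof.
  intros Hp Hal Hbe. assert (Hp0 : 0 < p) by lra.
  rewrite <- conv_eq by auto. rewrite PHI_fin by lra.
  set (x := rpow p (- INR (S n))). set (y := rpow p (2 * INR n + al + be + 3 - INR (S n))).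
  assert (Hxy : rpow p (al + be + 2) = x * y * p) by (unfold x, y; rpw Hp0).
  assert (Hb2 : rpow p (INR n + be + 2 - INR (S n)) = rpow p (be + 1)) by (f_equal; rewrite S_INR; ring).
  assert (Hb3 : rpow p (al + INR n + 2 - INR (S n)) = rpow p (al + 1)) by (f_equal; rewrite S_INR; ring).
  assert (H1 : forall i, 1 - p * p ^ i <> 0) by (intros; apply nzP; auto).
  assert (H2 : forall i, 1 - x * y * p * p ^ i <> 0).
  { intros i. rewrite <- Hxy. apply nzA; auto. generalize (pos_INR i); lra. }
  assert (E : sum_f_R0 (TT p al be n (S n)) (S n) =
     sum_f_R0 (fun k => qpoch p x k * qpoch p y k / (qpoch p p k * qpoch p (x * y * p) k) * p ^ k) (S n)).
  { apply sum_eq. intros k Hk. unfold TT, phi43_term. fold x y. rewrite Hb2, Hb3, Hxy.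
    assert (qpoch p p k <> 0) by (apply qpoch_nz; auto).
    assert (qpoch p (x * y * p) k <> 0) by (apply qpoch_nz; auto).
    assert (qpoch p (rpow p (be + 1)) k <> 0).
    { apply qpoch_nz; intros. apply nzA; auto. generalize (pos_INR i); lra. }
    assert (qpoch p (- rpow p (al + 1)) k <> 0) by (apply qpoch_nz; intros; apply nzB; auto).
    field. repeat split; auto. }
  rewrite E, qsum by auto.
  rewrite (qpoch_zero p (x * p) (S n) n) by (try lia; unfold x; rewrite Rmult_assoc; change (p * p ^ n) with (p ^ S n); rewrite <- (rpow_nat p (S n)) by lra;
      rewrite <- rpow_plus; replace (- INR (S n) + INR (S n)) with 0 by ring; rewrite rpow_0; ring).
  unfold Rdiv; ring.
Qed.

Lemma sh_ext (f g : nat -> R) j : (forall i, f i = g i) -> sh f j = sh g j.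
Proof. intros H; destruct j; simpl; auto. Qed.

Lemma cv_sh (u g : nat -> R) j :
  sum_f_R0 (fun k => u k * sh g (j - k)) j = sh (fun j => sum_f_R0 (fun k => u k * g (j - k)%nat) j) j.
Proof.
  destruct j as [|j].
  - simpl. ring.
  - rewrite tech5. replace (S j - S j)%nat with 0%nat by lia. cbn [sh].
    rewrite Rmult_0_r, Rplus_0_r. apply sum_eq. intros k Hk.
    replace (S j - k)%nat with (S (j - k)) by lia. reflexivity.
Qed.

Lemma conv_rec p al be n j : 0 < p < 1 -> -1 < al -> -1 < be -> (j <= S n)%nat ->
  conv p al be (S n) j = conv p al be n j + rec_c p al be n * sh (conv p al be n) j
     + rec_d p al be n * sh (sh (conv p al be (n - 1))) j.
Proof.
  intros Hp Hal Hbe Hj. unfold conv.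
  rewrite (sum_eq _ (fun k => uu p al be k * vv p al be n (j - k) +
      rec_c p al be n * (uu p al be k * sh (vv p al be n) (j - k)) +
      rec_d p al be n * (uu p al be k * sh (sh (vv p al be (n - 1))) (j - k)))).
  2: { intros k Hk. rewrite vrec by (auto; lia). ring. }
  rewrite !sum_plus, <- !sum_scal_l.
  rewrite !cv_sh. f_equal. f_equal. apply sh_ext. intros i. apply cv_sh.
Qed.

Definition H (f : nat -> R) (mu : C) (n : nat) : C :=
  Csum (fun j => Cmult (RtoC (f j)) (Defs.Cpow mu (n - j))) n.

Lemma Csum_ext (f g : nat -> C) n : (forall j, (j <= n)%nat -> f j = g j) -> Csum f n = Csum g n.
Proof.
  induction n as [|n IH]; intros E; simpl.
  - apply E; lia.
  - rewrite IH by (intros; apply E; lia). rewrite E by lia. reflexivity.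
Qed.

Lemma Csum_shift (f : nat -> C) n : Csum f (S n) = Cplus (f 0%nat) (Csum (fun j => f (S j)) n).
Proof.
  induction n as [|n IH].
  - simpl. reflexivity.
  - change (Csum f (S (S n))) with (Cplus (Csum f (S n)) (f (S (S n)))).
    rewrite IH. simpl. ring.
Qed.

Lemma Csum_lin (f g h : nat -> C) c d n :
  Csum (fun j => Cplus (Cplus (f j) (Cmult c (g j))) (Cmult d (h j))) n =
  Cplus (Cplus (Csum f n) (Cmult c (Csum g n))) (Cmult d (Csum h n)).
Proof. induction n as [|n IH]; simpl; [reflexivity|]. rewrite IH. ring. Qed.

Lemma Csum_mul (f : nat -> C) c n : Csum (fun j => Cmult (f j) c) n = Cmult (Csum f n) c.
Proof. induction n as [|n IH]; simpl; [reflexivity|]. rewrite IH. ring. Qed.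

Lemma H_ext f g mu n : (forall j, (j <= n)%nat -> f j = g j) -> H f mu n = H g mu n.
Proof. intros E. unfold H. apply Csum_ext. intros j Hj. rewrite E by auto. reflexivity. Qed.

Lemma H_S f mu n : H f mu (S n) = Cplus (Cmult mu (H f mu n)) (RtoC (f (S n))).
Proof.
  unfold H. change (Csum (fun j => Cmult (RtoC (f j)) (Defs.Cpow mu (S n - j))) (S n)) with
    (Cplus (Csum (fun j => Cmult (RtoC (f j)) (Defs.Cpow mu (S n - j))) n)
      (Cmult (RtoC (f (S n))) (Defs.Cpow mu (S n - S n)))).
  replace (S n - S n)%nat with 0%nat by lia.
  rewrite (Csum_ext _ (fun j => Cmult (Cmult (RtoC (f j)) (Defs.Cpow mu (n - j))) mu)).
  - rewrite Csum_mul. simpl. ring.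
  - intros j Hj. replace (S n - j)%nat with (S (n - j)) by lia. simpl. ring.
Qed.

Lemma H_sh f mu n : H (sh f) mu (S n) = H f mu n.
Proof.
  unfold H. rewrite Csum_shift. cbn [sh].
  match goal with |- Cplus ?a ?b = ?c => replace a with (RtoC 0) by ring end.
  rewrite Cplus_0_l. reflexivity.
Qed.

Lemma H_lin f g h c d mu n :
  H (fun j => f j + c * g j + d * h j) mu n =
  Cplus (Cplus (H f mu n) (Cmult (RtoC c) (H g mu n))) (Cmult (RtoC d) (H h mu n)).
Proof.
  unfold H. rewrite <- Csum_lin. apply Csum_ext. intros j Hj.
  rewrite !RtoC_plus, !RtoC_mult. ring.
Qed.

Lemma uu0 p al be : uu p al be 0 = 1.
Proof. unfold uu. cbn [qpoch INR]. replace (0 / 2) with 0 by field. rewrite rpow_0. field. Qed.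

Lemma bpoly_S p al be mu m :
  bpoly p al be (S m) mu = Cplus (Cmult (Cplus mu (RtoC (rec_c p al be m))) (bpoly p al be m mu))
     (Cmult (RtoC (rec_d p al be m)) (match m with O => RtoC 0 | S m' => bpoly p al be m' mu end)).
Proof.
  unfold bpoly. destruct m as [|m].
  - simpl. reflexivity.
  - change (bpair p al be mu (S (S m))) with
      (let '(bm1, bm) := bpair p al be mu (S m) in
       (bm, Cplus (Cmult (Cplus mu (RtoC (rec_c p al be (S m)))) bm) (Cmult (RtoC (rec_d p al be (S m))) bm1))).
    change (bpair p al be mu (S m)) with
      (let '(bm1, bm) := bpair p al be mu m in
       (bm, Cplus (Cmult (Cplus mu (RtoC (rec_c p al be m))) bm) (Cmult (RtoC (rec_d p al be m)) bm1))).
    destruct (bpair p al be mu m) as [u v]. simpl. reflexivity.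
Qed.

Lemma main_gen p al be mu n : 0 < p < 1 -> -1 < al -> -1 < be ->
  bpoly p al be n mu = H (conv p al be n) mu n /\ bpoly p al be (S n) mu = H (conv p al be (S n)) mu (S n).
Proof.
  intros Hp Hal Hbe.
  assert (step : forall n, bpoly p al be n mu = H (conv p al be n) mu n ->
     (match n with O => RtoC 0 | S m' => bpoly p al be m' mu end) = H (sh (conv p al be (n - 1))) mu n ->
     bpoly p al be (S n) mu = H (conv p al be (S n)) mu (S n)).
  { intros m IH1 IH2. rewrite bpoly_S, IH1, IH2.
    rewrite (H_ext (conv p al be (S m)) (fun j => conv p al be m j + rec_c p al be m * sh (conv p al be m) j
       + rec_d p al be m * sh (sh (conv p al be (m - 1))) j) mu (S m)).
    2: { intros j Hj. apply conv_rec; auto. }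
    rewrite H_lin, H_S, !H_sh, conv_top by auto. ring. }
  induction n as [|n IH].
  - assert (P0 : bpoly p al be 0 mu = H (conv p al be 0) mu 0).
    { unfold H, conv. simpl. rewrite uu0, vv0. unfold bpoly. simpl. ring_simplify. 
      rewrite Rmult_1_r. reflexivity. }
    split; auto. apply step; auto. unfold H. simpl. ring.
  - destruct IH as [IH1 IH2]. split; auto. apply step; auto.
    replace (S n - 1)%nat with n by lia. rewrite H_sh. auto.
Qed.

Theorem theorem4p1 (q alpha beta : R) :
  0 < q < 1 -> -1 < alpha -> -1 < beta ->
  let p := sqrt q in
  forall (n : nat) (mu : C),
    bpoly p alpha beta n mu = Csum (rhs_term p alpha beta n mu) n.
Proof.
  intros Hq Hal Hbe p n mu.
  assert (Hp : 0 < p < 1).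
  { unfold p. split; [apply sqrt_lt_R0; lra|]. rewrite <- sqrt_1. apply sqrt_lt_1; lra. }
  rewrite (proj1 (main_gen p alpha beta mu n Hp Hal Hbe)). unfold H.
  apply Csum_ext. intros j Hj. rewrite rhs_term_eq, conv_eq by (auto; lia). reflexivity.
Qed.
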